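(* Let $G$ be a finite, connected, undirected, unweighted graph without loops or multi-edges, with vertex set $V(G)$ of size $n \ge 2$. For distinct $v,u \in V(G)$ let $d(v,u)$ be the length (number of edges) of a shortest path between $v$ and $u$, let $\sigma(v,u) \ge 1$ be the number of distinct shortest paths between $v$ and $u$, and let $\Delta(G) = \max_{v,u \in V(G)} d(v,u)$ be the diameter of $G$. Define \[ ADPL(G) = \frac{1}{n(n-1)} \sum_{v \in V(G)} \sum_{u \in V(G)\setminus\{v\}} \frac{d(v,u)}{\sigma(v,u)}. \] Let $T \ge 1$ be an integer and let $v_1,\dots,v_T$ be vertices each chosen independently and uniformly at random from $V(G)$. For $1 \le t \le T$ set \[ \beta_t = \frac{1}{n-1} \sum_{u \in V(G)\setminus\{v_t\}} \frac{d(v_t,u)}{\sigma(v_t,u)}, \qquad \beta = \frac{1}{T}\sum_{t=1}^T \beta_t . \] Then for every $\epsilon > 0$, \[ \mathbf{P}\left[\,\left|ADPL(G) - \beta\right| > \epsilon\,\right] \le 2\exp\!\left(-2T\left(\frac{\epsilon}{\Delta(G)}\right)^2\right). \]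
   Context: The random variable $\beta$ is the output of the paper's sampling algorithm for estimating average discriminative path length: in each of $T$ iterations it picks a vertex uniformly at random (independently across iterations), computes distances and numbers of shortest paths from it to all other vertices, forms $\beta_t$, and finally outputs the average $\beta$. *)

(* Defs.v *)
From HB Require Import structures.
From mathcomp Require Import all_boot all_order all_algebra.
From mathcomp Require Import all_classical all_reals all_analysis.
Set Implicit Arguments. Unset Strict Implicit. Unset Printing Implicit Defensive.
Import Order.TTheory GRing.Theory Num.Theory.

(* A simple undirected graph on a finite vertex type V is given by an
   edge relation e : rel V, assumed symmetric and irreflexive. *)

Definition walk_of (V : finType) (e : rel V) (k : nat) (v u : V) :
  {set k.-tuple V} :=
  [set t : k.-tuple V | path e v t && (last v t == u)].

Definition has_walk (V : finType) (e : rel V) (k : nat) (v u : V) : bool :=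
  (0 < #|walk_of e k v u|)%N.

(* d(v,u): the least number of edges of a walk (= path) from v to u;
   0 by convention if u is unreachable (never happens for connected G). *)
Definition dist (V : finType) (e : rel V) (v u : V) : nat :=
  match pselect (exists k, has_walk e k v u) with
  | left h => ex_minn h
  | right _ => 0
  end.

(* sigma(v,u): the number of shortest paths from v to u, i.e. of vertex
   sequences of length d(v,u) forming a walk from v to u (a shortest walk
   is automatically a path, and in a simple graph a path is determined by
   its vertex sequence). *)
Definition nsp (V : finType) (e : rel V) (v u : V) : nat :=
  #|walk_of e (dist e v u) v u|.

Definition diam (V : finType) (e : rel V) : nat :=
  \max_(v : V) \max_(u : V) dist e v u.

Local Open Scope ring_scope.

Definition ADPL (R : realType) (V : finType) (e : rel V) : R :=
  (#|V|%:R * (#|V|.-1)%:R)^-1 *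
  \sum_(v : V) \sum_(u : V | u != v) (dist e v u)%:R / (nsp e v u)%:R.

Definition beta_of (R : realType) (V : finType) (e : rel V) (w : V) : R :=
  ((#|V|.-1)%:R)^-1 * \sum_(u : V | u != w) (dist e w u)%:R / (nsp e w u)%:R.

Definition beta (R : realType) (V : finType) (e : rel V) (T : nat)
  (s : {ffun 'I_T -> V}) : R :=
  (T%:R)^-1 * \sum_(t < T) beta_of R e (s t).

(* Probability of an event on T independent uniform samples from V:
   the uniform (product) distribution on {ffun 'I_T -> V}. *)
Definition sample_prob (R : realType) (V : finType) (T : nat)
  (A : pred {ffun 'I_T -> V}) : R :=
  #|[set s : {ffun 'I_T -> V} | A s]|%:R / (#|V| ^ T)%:R.

(* Main.v *)
Require Import Defs.
From HB Require Import structures.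
From mathcomp Require Import all_boot all_order all_algebra.
From mathcomp Require Import all_classical all_reals all_analysis.
From mathcomp Require Import lra ring.
Import Order.TTheory GRing.Theory Num.Theory.
Import numFieldNormedType.Exports.
Local Open Scope ring_scope.

Lemma exp_conv (R : realType) (t y : R) : 0 <= t -> t <= 1 ->
  expR (t * y) <= 1 - t + t * expR y.
Proof.
move=> t0 t1.
have := @convex_expR R (Itv01 t0 t1) y 0.
rewrite !convRE /= expR0 mulr0 addr0 mulr1.
by rewrite /unstable.onem addrC.
Qed.

Section S.
Variable R : realType.
Variable p : R.
Hypothesis p0 : 0 <= p.
Hypothesis p1 : p <= 1.
Definition A (h : R) : R := 1 - p + p * expR h.
Lemma A_gt0 y : 0 < A y.
Proof.
rewrite /A; have [->|pn0] := eqVneq p 0; first by rewrite mul0r subr0 addr0.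
have : 0 < p * expR y by rewrite mulr_gt0 ?expR_gt0 // lt_def pn0 p0.
move: p1; lra.
Qed.
Lemma dA (x : R) : is_derive x 1 A (p * expR x).
Proof. by rewrite /A; apply: is_derive_eq; rewrite add0r mul1r. Qed.
Definition N (y : R) : R := p * expR y * (A y)^-1 - p - y / 4.
Definition dN (y : R) : R := p * expR y / A y - (p * expR y / A y)^+2 - 1/4.
Lemma dN_le0 y : dN y <= 0.
Proof.
rewrite /dN; set q := p * expR y / A y.
have : 0 <= (q - 1/2)^+2 by apply: sqr_ge0.
move: p1; lra.
Qed.
Lemma dNP (x : R) : is_derive x 1 N (dN x).
Proof.
have hAV : is_derive x 1 (fun y => (A y)^-1) (- (A x) ^- 2 *: (p * expR x)).
  apply: is_deriveV; first by rewrite gt_eqF // A_gt0.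
  exact: dA.
rewrite /N.
apply: is_derive_eq.
rewrite /dN !scaler0 ?scaler0 ?addr0 ?subr0 ?add0r.
have hA : A x != 0 by rewrite gt_eqF // A_gt0.
rewrite /GRing.scale /=.

field.
by rewrite gt_eqF // A_gt0.
Qed.

Section C.
Local Open Scope classical_set_scope.
Lemma contP (f : R -> R) (df : R -> R) (a b : R) :
  (forall x : R, is_derive x 1 f (df x)) -> {within `[a, b], continuous f}.
Proof.
move=> H; apply: derivable_within_continuous => x _.
exact: (@ex_derive _ _ _ x 1 f (df x)).
Qed.
End C.

Lemma N_le0 (y : R) : 0 <= y -> N y <= 0.
Proof.
move=> y0.
have N0 : N 0 = 0.
  rewrite /N /A expR0 mulr1 subrK invr1 mulr1 mul0r subr0.
  by rewrite subrr.
have [c _ hc] := MVT_segment y0 (fun x _ => dNP x) (@contP _ _ 0 y dNP).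
move: hc; rewrite N0 !subr0 => ->.
exact: mulr_le0_ge0 (dN_le0 c) y0.
Qed.

Definition K (y : R) : R := A y * expR (- (p * y) - y ^+ 2 / 8).
Definition dK (y : R) : R := A y * expR (- (p * y) - y ^+ 2 / 8) * N y.

Lemma dKP (x : R) : is_derive x 1 K (dK x).
Proof.
rewrite /K.
have hE : is_derive x 1 (fun y => expR (- (p * y) - y ^+ 2 / 8))
   (expR (- (p * x) - x ^+ 2 / 8) * (- p - x / 4)).
  apply: is_derive_eq.
  rewrite !scaler0 /GRing.scale /=.
  by field.
apply: is_derive_eq.
have hA : A x != 0 by rewrite gt_eqF // A_gt0.
rewrite /dK /N /GRing.scale /=.
field.
by rewrite gt_eqF // A_gt0.
Qed.

Lemma K_le1 (h : R) : 0 <= h -> K h <= 1.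
Proof.
move=> h0.
have K0 : K 0 = 1.
  rewrite /K /A expR0 mulr1 subrK mul1r mulr0 oppr0 sub0r expr2 mul0r mul0r.
  by rewrite oppr0 expR0.
have [c cin hc] := MVT_segment h0 (fun x _ => dKP x) (@contP _ _ 0 h dKP).
move: cin; rewrite in_itv /= => /andP[c0 _].
rewrite -subr_le0 -K0 hc.
rewrite subr0; apply: mulr_le0_ge0 h0 => //.
rewrite /dK; apply: mulr_ge0_le0; last exact: N_le0.
by rewrite mulr_ge0 ?expR_ge0 // ltW // A_gt0.
Qed.
End S.

Definition mu {R : realType} {V : finType} (f : V -> R) : R :=
  (#|V|%:R)^-1 * \sum_(v : V) f v.

Lemma hoeff (R : realType) (V : finType) (f : V -> R) (D lam : R) :
  0 < D -> 0 <= lam -> (forall v, 0 <= f v <= D) -> (0 < #|V|)%N ->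
  \sum_(v : V) expR (lam * (f v - mu f)) <= #|V|%:R * expR (lam^+2 * D^+2 / 8).
Proof.
move=> D0 lam0 fb n0.
set n : R := #|V|%:R.
have n0' : 0 < n by rewrite /n ltr0n.
set S := \sum_(v : V) f v.
have S0 : 0 <= S by apply: sumr_ge0 => v _; case/andP: (fb v).
have SD : S <= n * D.
  have -> : n * D = \sum_(v : V) D by rewrite sumr_const mulr_natl.
  by apply: ler_sum => v _; case/andP: (fb v).
set p := S / (n * D).
have p0 : 0 <= p by rewrite /p divr_ge0 // mulr_ge0 // ltW.
have p1 : p <= 1 by rewrite /p ler_pdivrMr ?mul1r // mulr_gt0.
have e1 : \sum_(v : V) expR (lam * (f v - mu f)) =
    expR (- (lam * mu f)) * \sum_(v : V) expR (lam * f v).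
  rewrite mulr_sumr; apply: eq_bigr => v _; rewrite -expRD; congr expR; ring.
have e2 : \sum_(v : V) expR (lam * f v) <=
    \sum_(v : V) (1 + f v * ((expR (lam * D) - 1) / D)).
  apply: ler_sum => v _.
  case/andP: (fb v) => f0 f1.
  have t0 : 0 <= f v / D by rewrite divr_ge0 // ltW.
  have t1 : f v / D <= 1 by rewrite ler_pdivrMr ?mul1r.
  have := @exp_conv R _ (lam * D) t0 t1.
  have -> : f v / D * (lam * D) = lam * f v.
    by field; rewrite gt_eqF.
  move=> /le_trans; apply; rewrite le_eqVlt; apply/orP; left; apply/eqP.
  by field; rewrite gt_eqF.
have e3 : \sum_(v : V) (1 + f v * ((expR (lam * D) - 1) / D)) =
    n * A R p (lam * D).
  rewrite big_split /= sumr_const -mulr_suml -/S /A /p.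
  field; rewrite ?gt_eqF //.
have h0 : 0 <= lam * D by rewrite mulr_ge0 // ltW.
have eK : expR (- (lam * mu f)) * (n * A R p (lam * D)) =
    n * (K R p (lam * D) * expR (lam ^+ 2 * D ^+ 2 / 8)).
  rewrite /K mulrCA -mulrA -expRD.
  have -> : - (p * (lam * D)) - (lam * D) ^+ 2 / 8 + lam ^+ 2 * D ^+ 2 / 8
      = - (lam * mu f).
    by rewrite /p /mu -/S -/n; field; rewrite ?gt_eqF.
  by rewrite [expR _ * _]mulrC.
rewrite e1 (le_trans (ler_wpM2l (expR_ge0 _) e2)) // e3 eK.
rewrite ler_pM2l // -[leRHS]mul1r ler_wpM2r ?expR_ge0 //.
exact: K_le1.
Qed.

Lemma tail (R : realType) (V : finType) (T : nat) (f : V -> R) (D eps : R) :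
  0 < D -> 0 < eps -> (forall v, 0 <= f v <= D) -> (0 < #|V|)%N ->
  (#|[set s : {ffun 'I_T -> V} | T%:R * eps < \sum_(t < T) (f (s t) - mu f)]|%:R : R)
    <= (#|V| ^ T)%:R * expR (- (2 * T%:R * (eps / D) ^+ 2)).
Proof.
move=> D0 eps0 fb n0.
set lam := 4 * eps / D ^+ 2.
have lam0 : 0 < lam by rewrite /lam divr_gt0 ?mulr_gt0 ?exprn_gt0.
set g := fun v => expR (lam * (f v - mu f)).
set Ss := fun s : {ffun 'I_T -> V} => \sum_(t < T) (f (s t) - mu f).
set A := [set s : {ffun 'I_T -> V} | T%:R * eps < Ss s].
have step1 : (#|A|%:R : R) <=
    \sum_(s : {ffun 'I_T -> V}) expR (lam * (Ss s - T%:R * eps)).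
  rewrite -sumr_const big_mkcond /=; apply: ler_sum => s _.
  case: ifP => sA; last exact: expR_ge0.
  apply: le_trans (expR_ge1Dx _); rewrite lerDl mulr_ge0 // ?ltW //.
  by rewrite subr_gt0; move: sA; rewrite inE.
have step2 : \sum_(s : {ffun 'I_T -> V}) expR (lam * (Ss s - T%:R * eps)) =
    expR (- (lam * (T%:R * eps))) * (\sum_v g v) ^+ T.
  have -> : (\sum_v g v) ^+ T = \prod_(t < T) \sum_v g v.
    by rewrite prodr_const card_ord.
  rewrite bigA_distr_bigA mulr_sumr; apply: eq_bigr => x _.
  rewrite /g -expR_sum -expRD; congr expR.
  by rewrite /Ss mulrBr mulr_sumr addrC.
have hg : \sum_v g v <= #|V|%:R * expR (lam ^+ 2 * D ^+ 2 / 8).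
  exact: hoeff (ltW lam0) fb n0.
have hg0 : 0 <= \sum_v g v by apply: sumr_ge0 => v _; exact: expR_ge0.
apply: (le_trans step1); rewrite step2.
apply: (le_trans (ler_wpM2l (expR_ge0 _) (lerXn2r T _ _ hg))).
- by rewrite nnegrE.
- by rewrite nnegrE mulr_ge0 ?expR_ge0.
rewrite exprMn natrX mulrCA -expRM_natr -expRD.
rewrite ler_wpM2l ?ler0n // ler_expR le_eqVlt; apply/orP; left; apply/eqP.
rewrite /lam; field; by rewrite gt_eqF.
Qed.

Lemma dist_le_diam (V : finType) (e : rel V) (v u : V) : (dist e v u <= diam e)%N.
Proof.
rewrite /diam.
apply: leq_trans (leq_bigmax (F := fun u => dist e v u) u) _.
exact: (leq_bigmax (F := fun v => \max_(u : V) dist e v u) v).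
Qed.

Lemma term_bd (R : realType) (V : finType) (e : rel V) (v u : V) :
  0 <= ((dist e v u)%:R / (nsp e v u)%:R : R) <= (diam e)%:R.
Proof.
apply/andP; split; first by rewrite divr_ge0 ?ler0n.
apply: (@le_trans _ _ (dist e v u)%:R); last by rewrite ler_nat dist_le_diam.
have [->|s0] := eqVneq (nsp e v u) 0%N; first by rewrite invr0 mulr0 ler0n.
rewrite ler_pdivrMr ?ltr0n ?lt0n //.
by rewrite ler_peMr ?ler0n // ler1n lt0n.
Qed.

Theorem proposition2 (R : realType) (V : finType) (e : rel V)
  (e_sym : symmetric e) (e_irr : irreflexive e)
  (e_conn : forall v u : V, connect e v u)
  (hn : (2 <= #|V|)%N) (T : nat) (hT : (1 <= T)%N)
  (eps : R) (heps : 0 < eps) :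
  sample_prob R (fun s : {ffun 'I_T -> V} => `|ADPL R e - beta R e s| > eps)
    <= 2 * expR (- (2 * T%:R * (eps / (diam e)%:R) ^+ 2)).
Proof.
set E := [set s : {ffun 'I_T -> V} | `|ADPL R e - beta R e s| > eps].
have nT0 : (0 < #|V| ^ T)%N by rewrite expn_gt0; apply/orP; left; apply: leq_trans hn.
have nT0' : (0 : R) < (#|V| ^ T)%:R by rewrite ltr0n.
rewrite /sample_prob -/E ler_pdivrMr //.
have [d0|dpos] := eqVneq (diam e) 0%N.
  rewrite d0 invr0 mulr0 expr0n /= mulr0 oppr0 expR0 mulr1.
  apply: (@le_trans _ _ (#|V| ^ T)%:R).
    by rewrite ler_nat; have := max_card (mem E); rewrite card_ffun card_ord.
  by rewrite -[leLHS]mul1r ler_wpM2r ?ler0n // ler1n.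
set D : R := (diam e)%:R.
have D0 : 0 < D by rewrite /D ltr0n lt0n.
set f := beta_of R e.
have n1 : (0 < #|V|.-1)%N by rewrite -subn1 subn_gt0.
have n1' : (0 : R) < (#|V|.-1)%:R by rewrite ltr0n.
have fb : forall w, 0 <= f w <= D.
  move=> w; apply/andP; split.
    rewrite /f /beta_of mulr_ge0 ?invr_ge0 ?ler0n //.
    by apply: sumr_ge0 => u _; case/andP: (term_bd R V e w u).
  rewrite /f /beta_of ler_pdivrMl //.
  apply: (@le_trans _ _ (\sum_(u : V | u != w) D)).
    by apply: ler_sum => u _; case/andP: (term_bd R V e w u).
  rewrite sumr_const cardC1 mulr_natl.
  by [].
have hADPL : ADPL R e = mu f.
  rewrite /ADPL /mu /f /beta_of -mulr_sumr invfM -mulrA.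
  by [].
have T0 : (0 : R) < T%:R by rewrite ltr0n.
have hdiff : forall s : {ffun 'I_T -> V},
    ADPL R e - beta R e s = - (T%:R^-1 * \sum_(t < T) (f (s t) - mu f)).
  move=> s; rewrite hADPL /beta sumrB sumr_const card_ord -/f.
  by field; rewrite gt_eqF.
set f' := fun v => D - f v.
have fb' : forall w, 0 <= f' w <= D.
  by move=> w; rewrite /f' subr_ge0 lerBlDr lerDl; case/andP: (fb w) => -> ->.
have hmu' : mu f' = D - mu f.
  rewrite /mu /f' sumrB sumr_const -mulr_natl.
  by field; rewrite gt_eqF // ltr0n; apply: leq_trans hn.
have hS' : forall s : {ffun 'I_T -> V},
    \sum_(t < T) (f' (s t) - mu f') = - \sum_(t < T) (f (s t) - mu f).
  move=> s; rewrite -sumrN; apply: eq_bigr => t _; rewrite hmu' /f'; ring.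
set A1 := [set s : {ffun 'I_T -> V} | T%:R * eps < \sum_(t < T) (f (s t) - mu f)].
set A2 := [set s : {ffun 'I_T -> V} | T%:R * eps < \sum_(t < T) (f' (s t) - mu f')].
have sub : E \subset A1 :|: A2.
  apply/fintype.subsetP => s; rewrite !inE hdiff normrN normrM gtr0_norm ?invr_gt0 //.
  rewrite ltr_pdivlMl // ltr_normr hS'.
  by [].
have n0 : (0 < #|V|)%N by apply: leq_trans hn.
have t1 := @tail R V T f D eps D0 heps fb n0.
have t2 := @tail R V T f' D eps D0 heps fb' n0.
apply: (@le_trans _ _ (#|A1| + #|A2|)%:R).
  rewrite ler_nat; apply: leq_trans (subset_leq_card sub) _.
  by rewrite cardsU leq_subr.
rewrite natrD.
set X := expR _; set N := (#|V| ^ T)%:R.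
have -> : 2 * X * N = N * X + N * X by ring.
exact: lerD.
Qed.
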